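(* Let $R,S$ be finite nonempty sets, $k$ a positive integer, $p_r>0$ ($r\in R$), $T=\sum_{r\in R}p_r$, $d_{r,s}\ge0$, and $\kappa<0$. Let $F$ be the set of $(\mathbf x,\mathbf y)$ with $x_s,y_{r,s}\in\{0,1\}$, $\sum_{s\in S}x_s=k$, $y_{r,s}\le x_s$, and $\sum_{s\in S}y_{r,s}=1$ for all $r$. For $\mathbf y$ let $\overline{\mathcal K}(\mathbf y)=\sum_{r,s}p_ry_{r,s}e^{-\kappa d_{r,s}}$ and $\mathcal K(\mathbf y)=-\frac1\kappa\ln\left(\frac1T\overline{\mathcal K}(\mathbf y)\right)$. Let $U\subseteq S$, $c_s\ge0$ for $s\in U$, $\sigma(\mathbf x)=\sum_{s\in U}c_sx_s$, $\sigma^{max}=\max_{(\mathbf x,\mathbf y)\in F}\sigma(\mathbf x)$. Let $(\mathbf x^{all},\mathbf y^{all})$ be optimal for $\min\{\overline{\mathcal K}(\mathbf y):(\mathbf x,\mathbf y)\in F\}$, $\mathcal K^{all}=\mathcal K(\mathbf y^{all})$, $\sigma^{all}=\sigma(\mathbf x^{all})$. Set $\hat{\mathcal K}=\mathcal K^{all}$ and let $(\mathbf x^*,\mathbf y^*,v^*,q^* )$ be optimal for \[ \text{(KPL}^p)\quad \min\ \overline{\mathcal K}(\mathbf y)+Te^{-\kappa\hat{\mathcal K}}(v-1)\ \text{ s.t. } (\mathbf x,\mathbf y)\in F,\ v\ge e^{q},\ q=-\kappa\,\sigma(\mathbf x), \] with $\sigma^*=\sigma(\mathbf x^* )$, $q^*=-\kappa\sigma^*$,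 $\mathcal K^*=\mathcal K(\mathbf y^* )$. Let $w\in(0,1)$, $\beta_i=iw$ for $i=0,\dots,n$ with $nw>-\kappa\sigma^{max}$, and $g(q)=\max_{0\le i\le n}\left(e^{\beta_i}+e^{\beta_i}(q-\beta_i)\right)$ (the tangent-line approximation of $e^q$ in the linearized model (KPL$^t$)). Define $\ddot\sigma$ by \[ \mathcal K^*+\ddot\sigma=-\tfrac1\kappa\ln\left(\tfrac1T\left(\overline{\mathcal K}(\mathbf y^* )+Te^{-\kappa\hat{\mathcal K}}\left(g(q^* )-1\right)\right)\right), \] and let $A(w):=e^{\frac{we^w}{e^w-1}-1}-\frac{we^w}{e^w-1}$. Then the penalized locations are under-penalized and \[ 0\le\sigma^*-\ddot\sigma\le\sigma^{all}\left(1-e^{\kappa\sigma^*}\right)+\frac1\kappa\ln\left(1-A(w)\right). \] If, in addition, $c_s=c$ for all $s\in U$ and $w=-\kappa c$, then \[ 0\le\sigma^*-\ddot\sigma\le\sigma^{all}\left(1-e^{\kappa\sigma^*}\right). \]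
   Context: $U$ is a set of less desirable potential facility locations with distance penalties $c_s$; $\sigma^*$ is the intended penalty of the optimal solution of the penalized Kolm–Pollak model and $\ddot\sigma$ the penalty actually applied to the optimal Kolm–Pollak score by the linearized penalized model, which uses the approximation $\hat{\mathcal K}=\mathcal K^{all}$ of the optimal unpenalized score. *)

(* Defs.v *)
From HB Require Import structures.
From mathcomp Require Import all_boot all_order all_algebra.
From mathcomp Require Import reals.
From mathcomp Require Import sequences exp.
Set Implicit Arguments. Unset Strict Implicit. Unset Printing Implicit Defensive.
Import Order.TTheory GRing.Theory Num.Theory.
Local Open Scope ring_scope.

Section KP.
Variables (R : realType) (Rr Ss : finType).

Definition binary (a : R) : Prop := a = 0 \/ a = 1.

Definition feasible (k : nat) (x : Ss -> R) (y : Rr -> Ss -> R) : Prop :=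
  [/\ forall s, binary (x s),
      forall r s, binary (y r s),
      \sum_(s : Ss) x s = k%:R,
      forall r s, y r s <= x s &
      forall r, \sum_(s : Ss) y r s = 1].

Definition Kbar (p : Rr -> R) (d : Rr -> Ss -> R) (kappa : R) (y : Rr -> Ss -> R) : R :=
  \sum_(r : Rr) \sum_(s : Ss) p r * y r s * expR (- kappa * d r s).

Definition totT (p : Rr -> R) : R := \sum_(r : Rr) p r.

Definition KP (p : Rr -> R) (d : Rr -> Ss -> R) (kappa : R) (y : Rr -> Ss -> R) : R :=
  - kappa^-1 * ln ((totT p)^-1 * Kbar p d kappa y).

Definition sigma (U : {set Ss}) (c : Ss -> R) (x : Ss -> R) : R :=
  \sum_(s in U) c s * x s.

Definition KPLp_obj (p : Rr -> R) (d : Rr -> Ss -> R) (kappa Khat : R)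
  (y : Rr -> Ss -> R) (v : R) : R :=
  Kbar p d kappa y + totT p * expR (- kappa * Khat) * (v - 1).

Definition KPLp_feasible (k : nat) (U : {set Ss}) (c : Ss -> R) (kappa : R)
  (x : Ss -> R) (y : Rr -> Ss -> R) (v q : R) : Prop :=
  [/\ feasible k x y, expR q <= v & q = - kappa * sigma U c x].

End KP.

(* tangent-line approximation g(q) = max_{0<=i<=n} (e^{b_i} + e^{b_i}(q - b_i)),
   b_i = i w.  The fold starts from the i = 0 term, so this is exactly the max. *)
Definition gtan (R : realType) (n : nat) (w q : R) : R :=
  \big[Num.max/(expR 0 + expR 0 * (q - 0))]_(i < n.+1)
     (expR (i%:R * w) + expR (i%:R * w) * (q - i%:R * w)).

Definition Aw (R : realType) (w : R) : R :=
  expR (w * expR w / (expR w - 1) - 1) - w * expR w / (expR w - 1).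

(* Main.v *)
Require Import Defs.
From HB Require Import structures.
From mathcomp Require Import all_boot all_order all_algebra.
From mathcomp Require Import reals.
From mathcomp Require Import sequences exp.
From mathcomp Require Import ring lra.
Import Order.TTheory GRing.Theory Num.Theory.
Local Open Scope ring_scope.

Lemma core (R : realType) (A B K g E Q qs qall : R) :
  0 < B -> B <= K -> K + B*(E-1) <= B*Q -> E = expR qs -> Q = expR qall ->
  0 <= qs -> 1 <= g -> (1-A)*E <= g -> 0 <= A -> A < 1 ->
  (1-A)*E*expR(-(qall*(1 - expR(-qs))))*K <= K + B*(g-1).
Proof.
move=> B0 BK HKQ HE HQ qs0 g1 gA A0 A1.
have hE1 : 1 + qs <= E by rewrite HE expR_ge1Dx.
have EQ : E <= Q.
  have : B * E <= B * Q by nra.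
  by rewrite ler_pM2l.
have qsq : qs <= qall by rewrite -ler_expR -HE -HQ.
set iE := expR (- qs).
have EiE : E * iE = 1 by rewrite /iE expRN HE mulfV // gt_eqF // expR_gt0.
have iE0 : 0 < iE by rewrite expR_gt0.
set s := qall - qs.
have es : expR (- qall) = iE * expR (- s).
  by rewrite /iE -expRD; congr expR; rewrite /s; lra.
have QiQ : Q * expR (- qall) = 1 by rewrite HQ -expRD addrN expR0.
have hs : 1 - s <= expR (- s) by have := expR_ge1Dx (- s); lra.
have s0 : 0 <= s by rewrite /s; lra.
set z := (E - 1) * expR (- qall).
have hz : z = (1 - iE) * expR (- s).
  rewrite /z es mulrA; congr (_ * _); nra.
have expo : qs - z - qall * (1 - iE) <= 0.
  have iE1 : iE <= 1 by nra.
  have : (1 - iE) * (1 - s) <= (1 - iE) * expR (- s) by apply: ler_wpM2l; lra.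
  rewrite hz /s. nra.
have M0 : 0 < Q - E + 1 by lra.
have hM : Q - E + 1 <= Q * expR (- z).
  have : 1 - z <= expR (- z) by have := expR_ge1Dx (- z); lra.
  have Q0 : 0 <= Q by rewrite HQ ltW // expR_gt0.
  move=> h; have := ler_wpM2l Q0 h.
  rewrite /z mulrBr mulr1 mulrA (mulrC Q) -mulrA QiQ. lra.
have s4 : E * (Q - E + 1) * expR (- (qall * (1 - iE))) <= Q.
  have e0 : 0 <= E * expR (- (qall * (1 - iE))).
    by apply: mulr_ge0; [lra | exact: ltW (expR_gt0 _)].
  have := ler_wpM2l e0 hM.
  have -> : E * expR (- (qall * (1 - iE))) * (Q * expR (- z))
     = Q * expR (qs - z - qall * (1 - iE)).
    have -> : expR (qs - z - qall * (1 - iE)) =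
       expR qs * expR (- (qall * (1 - iE))) * expR (- z).
      by rewrite -!expRD; congr expR; lra.
    rewrite HE; ring.
  have : expR (qs - z - qall * (1 - iE)) <= 1.
    by rewrite -[X in _ <= X]expR0 ler_expR; exact: expo.
  have Q0 : 0 <= Q by rewrite HQ ltW // expR_gt0.
  nra.
rewrite -(ler_pM2r M0).
have K0 : 0 < K by lra.
have t1 : K * ((1 - A) * Q) <= (K + B * (g - 1)) * (Q - E + 1).
  have : 0 <= (g - 1) * (B * (Q - E + 1) - K) by apply: mulr_ge0; nra.
  have : (1 - A) * Q <= Q - E + g by nra.
  nra.
have t2 : (1 - A) * E * expR (- (qall * (1 - iE))) * K * (Q - E + 1)
    <= K * ((1 - A) * Q).
  have h0 : 0 <= K * (1 - A) by nra.
  have := ler_wpM2l h0 s4. 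
  have -> : (1 - A) * E * expR (- (qall * (1 - iE))) * K * (Q - E + 1) =
     K * (1 - A) * (E * (Q - E + 1) * expR (- (qall * (1 - iE)))) by ring.
  by rewrite [K * ((1 - A) * Q)]mulrA.
lra.
Qed.


Lemma final (R : realType) (kappa T B K g E Q qs qall A ss sall : R) :
 kappa < 0 -> 0 < T -> 0 < B -> B <= K -> K + B*(E-1) <= B*Q -> E = expR qs -> Q = expR qall ->
 qs = -kappa*ss -> qall = -kappa*sall -> 0 <= qs -> 1 <= g -> g <= E -> (1-A)*E <= g -> 0<=A -> A<1 ->
 0 <= ss - (-kappa^-1 * ln (T^-1 * (K + B*(g-1))) - (-kappa^-1 * ln (T^-1 * K))) /\
 ss - (-kappa^-1 * ln (T^-1 * (K + B*(g-1))) - (-kappa^-1 * ln (T^-1 * K)))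
   <= sall * (1 - expR (kappa*ss)) + kappa^-1 * ln (1 - A).
Proof.
move=> k0 T0 B0 BK HKQ HE HQ Hqs Hqall qs0 g1 gE gA A0 A1.
set sdd := (-kappa^-1 * ln (T^-1 * (K + B*(g-1))) - (-kappa^-1 * ln (T^-1 * K))).
have a0 : 0 < - kappa by lra.
have ia0 : 0 < (- kappa)^-1 by rewrite invr_gt0.
have K0 : 0 < K by lra.
set X := K + B * (g - 1).
have X0 : 0 < X by rewrite /X; nra.
have iT0 : 0 < T^-1 by rewrite invr_gt0.
have iK0 : 0 < K^-1 by rewrite invr_gt0.
have XK0 : 0 < X / K by rewrite divr_gt0.
have lnX : ln (T^-1 * X) = ln (T^-1 * K) + ln (X / K).
  rewrite -lnM ?posrE ?mulr_gt0 //; congr ln.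
  have -> : T^-1 * K * (X / K) = T^-1 * X * (K / K) by ring.
  by rewrite divff ?gt_eqF // mulr1.
set L := ln (X / K).
have sddE : sdd = (- kappa)^-1 * L.
  by rewrite /sdd lnX -invrN /L; ring.
have ssE : ss = (- kappa)^-1 * qs.
  by rewrite Hqs mulrA mulVf ?mul1r // gt_eqF.
have sallE : sall = (- kappa)^-1 * qall.
  by rewrite Hqall mulrA mulVf ?mul1r // gt_eqF.
have E0 : 0 < E by rewrite HE expR_gt0.
split.
  have : L <= qs.
    rewrite /L -[X in _ <= X]expRK -HE ler_ln ?posrE //.
    rewrite ler_pdivrMr //. rewrite /X. nra.
  rewrite sddE ssE => h; nra.
have kE : expR (kappa * ss) = expR (- qs) by rewrite Hqs; congr expR; ring.
rewrite kE sddE ssE sallE.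
have : ln (1 - A) + qs - qall * (1 - expR (- qs)) <= L.
  have c := @core _ _ _ _ _ _ _ _ _ B0 BK HKQ HE HQ qs0 g1 gA A0 A1.
  have P1 : 0 < 1 - A by lra.
  have -> : ln (1 - A) + qs - qall * (1 - expR (- qs)) =
     ln ((1 - A) * E * expR (- (qall * (1 - expR (- qs))))).
    rewrite lnM ?posrE ?mulr_gt0 ?expR_gt0 // lnM ?posrE ?expR_gt0 //.
    by rewrite !expRK HE expRK; ring.
  rewrite /L ler_ln ?posrE ?mulr_gt0 ?expR_gt0 //.
  by rewrite ler_pdivlMr.
have -> : kappa^-1 = - (- kappa)^-1 by rewrite invrN opprK.
move=> h; nra.
Qed.


Lemma expR1_lt3 (R : realType) : expR (1 : R) < 3.
Proof.
have -> : (1 : R) = 6%:R * (1/6) by lra.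
rewrite expRM_natl.
have h : expR (- (1/6 : R)) >= 5/6 by have := expR_ge1Dx (- (1/6 : R)); lra.
have y0 : 0 < expR (1/6 : R) by apply: expR_gt0.
have hy : expR (1/6 : R) <= 6/5.
  move: h; rewrite expRN => h.
  have := ler_wpM2l (ltW y0) h; rewrite mulfV ?gt_eqF //; lra.
apply: (le_lt_trans (y := (6/5 : R) ^+ 6)).
  by rewrite ler_pXn2r // ?nnegrE; lra.
rewrite !exprS expr0; lra.
Qed.

Lemma Aw_props (R : realType) (w : R) : 0 < w -> w < 1 ->
  exists t0, [/\ 0 <= t0, t0 <= w, Aw w = expR t0 - 1 - t0 &
     Aw w = expR t0 - expR w * (1 + t0 - w)].
Proof.
move=> w0 w1.
set ew := expR w.
have ew1 : 1 + w <= ew by apply: expR_ge1Dx.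
have ewi : ew * expR (- w) = 1 by rewrite /ew -expRD addrN expR0.
have hm : 1 - w <= expR (- w) by have := expR_ge1Dx (- w); lra.
have d0 : 0 < ew - 1 by lra.
set u := w * ew / (ew - 1).
have uE : u * (ew - 1) = w * ew by rewrite /u mulfVK ?gt_eqF.
exists (u - 1); split.
- have : ew - 1 <= u * (ew - 1).
    rewrite uE.
    have := ler_wpM2l (ltW (lt_trans ltr01 (lt_le_trans _ ew1))) hm.
    rewrite ewi => h; have : 0 < 1 + w by lra. move=> hh; move: h. 
    rewrite -/ew. nra.
  move=> h; have : 1 <= u by rewrite -(ler_pM2r d0) mul1r.
  lra.
- have : u * (ew - 1) <= (1 + w) * (ew - 1) by rewrite uE; nra.
  by rewrite ler_pM2r // => h; lra.
- by rewrite /Aw -/ew -/u; ring.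
- rewrite /Aw -/ew -/u.
  have -> : ew * (1 + (u - 1) - w) = u by nra.
  done.
Qed.

Lemma Aw_bounds (R : realType) (w : R) : 0 < w -> w < 1 -> 0 <= Aw w /\ Aw w < 1.
Proof.
move=> w0 w1; have [t0 [t00 t0w A1 _]] := @Aw_props R w w0 w1.
rewrite A1; split.
  by have := expR_ge1Dx t0; lra.
have e3 := expR1_lt3 R.
have : expR (1 : R) = expR t0 * expR (1 - t0) by rewrite -expRD; congr expR; ring.
have := expR_ge1Dx (1 - t0).
have := expR_ge1Dx t0.
have := expR_gt0 t0.
nra.
Qed.


Lemma tangent_le (R : realType) (b q : R) : expR b + expR b * (q - b) <= expR q.
Proof.
have -> : expR q = expR b * expR (q - b) by rewrite -expRD; congr expR; ring.
have := expR_ge1Dx (q - b); have := expR_gt0 b; nra.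
Qed.

Lemma gtan_le (R : realType) n (w q : R) : gtan n w q <= expR q.
Proof.
rewrite /gtan; apply: (big_ind (fun v => v <= expR q)).
- exact: tangent_le.
- by move=> x y hx hy; rewrite ge_max hx hy.
- by move=> i _; apply: tangent_le.
Qed.

Lemma le_bigmax_seq (R : realType) (I : eqType) (s : seq I) (x0 : R) (F : I -> R) j :
  j \in s -> F j <= \big[Num.max/x0]_(i <- s) F i.
Proof.
elim: s => // a s IH; rewrite in_cons big_cons => /orP [/eqP -> | h].
  by rewrite le_max lexx.
by rewrite le_max IH ?orbT.
Qed.

Lemma gtan_ge (R : realType) n (w q : R) (j : 'I_n.+1) :
  expR (j%:R * w) + expR (j%:R * w) * (q - j%:R * w) <= gtan n w q.
Proof.
rewrite /gtan.
exact: (@le_bigmax_seq R _ _ _ (fun i : 'I_n.+1 => expR (i%:R * w) + expR (i%:R * w) * (q - i%:R * w)) j (mem_index_enum j)).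
Qed.

Lemma find_i (R : realType) (w q : R) n : 0 < w -> 0 <= q -> q < n%:R * w ->
  exists i : nat, [/\ (i < n)%N, i%:R * w <= q & q < i.+1%:R * w].
Proof.
move=> w0 q0; elim: n => [|n IH] h.
  by move: h; rewrite mul0r; lra.
case: (ltP q (n%:R * w)) => hq.
  by have [i [hi h1 h2]] := IH hq; exists i; split => //; apply: ltnW.
by exists n; split.
Qed.

Lemma gtan_lb (R : realType) n (w q : R) : 0 < w -> w < 1 -> 0 <= q -> q < n%:R * w ->
  (1 - Aw w) * expR q <= gtan n w q.
Proof.
move=> w0 w1 q0 hq.
have [t0 [t00 t0w A1 A2]] := @Aw_props R w w0 w1.
have [A0 _] := @Aw_bounds R w w0 w1.
have [i [hi h1 h2]] := @find_i R w q n w0 q0 hq.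
set b := i%:R * w.
set t := q - b.
have eb0 : 0 < expR b by apply: expR_gt0.
have ebq : expR b <= expR q by rewrite ler_expR.
have key : expR q - expR b * Aw w <= gtan n w q.
  have eq1 : expR q = expR b * expR t by rewrite -expRD /t; congr expR; ring.
  have h1' : b <= q by [].
  have t0' : 0 <= t by rewrite /t; lra.
  have tw : t < w by move: h2; rewrite -natr1 mulrDl mul1r /t /b; lra.
  case: (leP t t0) => ht.
    apply: le_trans (@gtan_ge R n w q (Ordinal (ltnW hi : (i < n.+1)%N))); rewrite /= -/b -/t.
    have inner : expR t - Aw w <= 1 + t.
      have := expR_ge1Dx (t0 - t).
      have : expR t0 = expR t * expR (t0 - t) by rewrite -expRD; congr expR; ring.
      have := expR_ge1Dx t.
      rewrite A1; nra.
    have := ler_wpM2l (ltW eb0) inner.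
    rewrite eq1; lra.
  apply: le_trans (@gtan_ge R n w q (Ordinal (hi : (i.+1 < n.+1)%N))); rewrite /=.
  have -> : i.+1%:R * w = b + w by rewrite -natr1 /b; ring.
  rewrite expRD.
  have -> : q - (b + w) = t - w by rewrite /t; ring.
  have inner : expR t - Aw w <= expR w * (1 + (t - w)).
    have := expR_ge1Dx (- (t - t0)).
    have : expR t0 = expR t * expR (- (t - t0)) by rewrite -expRD; congr expR; ring.
    have : expR t <= expR w by rewrite ler_expR; lra.
    have := expR_gt0 w.
    have := expR_gt0 t.
    rewrite A2; nra.
  have := ler_wpM2l (ltW eb0) inner.
  rewrite eq1; lra.
apply: le_trans key.
have : expR b * Aw w <= expR q * Aw w by apply: ler_wpM2r.
lra.
Qed.


Lemma KbarT (R : realType) (Rr Ss : finType) k (p : Rr -> R) (d : Rr -> Ss -> R) (kappa : R) (x : Ss -> R) (y : Rr -> Ss -> R) :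
  (forall r, 0 < p r) -> (forall r s, 0 <= d r s) -> kappa < 0 ->
  feasible k x y -> totT p <= Kbar p d kappa y.
Proof.
move=> Hp Hd Hk [_ Hy _ _ Hy1].
rewrite /Kbar /totT; apply: ler_sum => r _.
have e : p r = \sum_(s : Ss) p r * y r s.
  by rewrite -[LHS]mulr1 -(Hy1 r) mulr_sumr.
rewrite [X in X <= _]e.
apply: ler_sum => s _; rewrite -[X in X <= _]mulr1; apply: ler_wpM2l.
  by apply: mulr_ge0; [exact: ltW | case: (Hy r s) => ->; lra].
by have := expR_ge1Dx (- kappa * d r s); have := Hd r s; nra.
Qed.

Lemma sigma_ge0 (R : realType) (Ss : finType) (U : {set Ss}) (c x : Ss -> R) :
  (forall s, s \in U -> 0 <= c s) -> (forall s, binary (x s)) -> 0 <= sigma U c x.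
Proof.
move=> Hc Hx; rewrite /sigma; apply: sumr_ge0 => s sU.
by apply: mulr_ge0; [exact: Hc | case: (Hx s) => ->; lra].
Qed.

Lemma sum_nat (R : realType) (Ss : finType) (U : {set Ss}) (x : Ss -> R) :
  (forall s, binary (x s)) -> exists m : nat, \sum_(s in U) x s = m%:R.
Proof.
move=> Hx; apply: (big_ind (fun v => exists m : nat, v = m%:R)).
- by exists 0%N.
- by move=> a b [m1 ->] [m2 ->]; exists (m1 + m2)%N; rewrite natrD.
- by move=> s _; case: (Hx s) => ->; [exists 0%N | exists 1%N].
Qed.

Theorem corollary3 (R : realType) (Rr Ss : finType)
  (HRne : (0 < #|Rr|)%N) (HSne : (0 < #|Ss|)%N)
  (k : nat) (Hk : (0 < k)%N)
  (p : Rr -> R) (Hp : forall r, 0 < p r)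
  (d : Rr -> Ss -> R) (Hd : forall r s, 0 <= d r s)
  (kappa : R) (Hkappa : kappa < 0)
  (U : {set Ss}) (c : Ss -> R) (Hc : forall s, s \in U -> 0 <= c s)
  (sigma_max : R)
  (Hsmax1 : exists (x : Ss -> R) (y : Rr -> Ss -> R), feasible k x y /\ sigma U c x = sigma_max)
  (Hsmax2 : forall (x : Ss -> R) (y : Rr -> Ss -> R), feasible k x y -> sigma U c x <= sigma_max)
  (xall : Ss -> R) (yall : Rr -> Ss -> R)
  (Hall1 : feasible k xall yall)
  (Hall2 : forall (x : Ss -> R) (y : Rr -> Ss -> R), feasible k x y -> Kbar p d kappa yall <= Kbar p d kappa y)
  (xs : Ss -> R) (ys : Rr -> Ss -> R) (vs qs : R)
  (Hs1 : KPLp_feasible k U c kappa xs ys vs qs)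
  (Hs2 : forall (x : Ss -> R) (y : Rr -> Ss -> R) (v q : R), KPLp_feasible k U c kappa x y v q ->
     KPLp_obj p d kappa (KP p d kappa yall) ys vs
       <= KPLp_obj p d kappa (KP p d kappa yall) y v)
  (w : R) (Hw0 : 0 < w) (Hw1 : w < 1)
  (n : nat) (Hn : n%:R * w > - kappa * sigma_max) :
  let T := totT p in
  let Kall := KP p d kappa yall in
  let sigma_all := sigma U c xall in
  let Khat := Kall in
  let sigma_s := sigma U c xs in
  let Ks := KP p d kappa ys in
  let sigma_dd :=
    - kappa^-1 * ln (T^-1 * (Kbar p d kappa ys
        + T * expR (- kappa * Khat) * (gtan n w qs - 1))) - Ks in
  (0 <= sigma_s - sigma_dd /\
   sigma_s - sigma_dd <= sigma_all * (1 - expR (kappa * sigma_s))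
                         + kappa^-1 * ln (1 - Aw w)) /\
  (forall c0 : R, (forall s, s \in U -> c s = c0) -> w = - kappa * c0 ->
    0 <= sigma_s - sigma_dd /\
    sigma_s - sigma_dd <= sigma_all * (1 - expR (kappa * sigma_s))).
Proof.
move=> T Kall sigma_all Khat sigma_s Ks sigma_dd.
have [r0 _] := card_gt0P HRne.
have T0 : 0 < T.
  rewrite /T /totT (bigD1 r0) //=.
  have := Hp r0; have : 0 <= \sum_(i | i != r0) p i by apply: sumr_ge0 => i _; exact: ltW.
  lra.
have [Hfs Hvs Hqs] := Hs1.
set B := Kbar p d kappa yall.
set K := Kbar p d kappa ys.
have BT : T <= B := @KbarT R Rr Ss k p d kappa xall yall Hp Hd Hkappa Hall1.
have B0 : 0 < B by lra.
have BK : B <= K := Hall2 xs ys Hfs.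
have TB : T * expR (- kappa * Kall) = B.
  rewrite /Kall /KP mulrA mulrNN mulfV ?lt_eqF // mul1r lnK ?posrE ?mulr_gt0 ?invr_gt0 //.
  by rewrite mulrA mulfV ?gt_eqF // mul1r.
set qall := - kappa * sigma_all.
set E := expR qs.
set Q := expR qall.
have HKQ : K + B * (E - 1) <= B * Q.
  have h := Hs2 xall yall Q qall (And3 Hall1 (lexx _) erefl).
  move: h; rewrite /KPLp_obj -/Kall TB -/K -/B => h.
  have : B * (E - 1) <= B * (vs - 1) by apply: ler_wpM2l; rewrite /E; lra.
  lra.
have sall0 : 0 <= sigma_all by apply: sigma_ge0 => //; case: Hall1.
have ss0 : 0 <= sigma_s by apply: sigma_ge0 => //; case: Hfs.
have qs0 : 0 <= qs by rewrite Hqs -/sigma_s; nra.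
have qsn : qs < n%:R * w.
  have := Hsmax2 xs ys Hfs; rewrite Hqs -/sigma_s => h; nra.
have g1 : 1 <= gtan n w qs.
  have := @gtan_ge R n w qs ord0; rewrite /= mul0r expR0; lra.
have gE : gtan n w qs <= E := @gtan_le R n w qs.
have gA : (1 - Aw w) * E <= gtan n w qs := @gtan_lb R n w qs Hw0 Hw1 qs0 qsn.
have [A0 A1] := @Aw_bounds R w Hw0 Hw1.
rewrite /sigma_dd /Ks /Khat TB /KP -/K.
split.
  exact: @final R kappa T B K (gtan n w qs) E Q qs qall _ sigma_s sigma_all Hkappa T0 B0 BK HKQ erefl erefl Hqs erefl qs0 g1 gE gA A0 A1.
move=> c0 hc hw.
have [m hm] := @sum_nat R Ss U xs (fun s => match Hfs with And5 h _ _ _ _ => h s end).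
have qsm : qs = m%:R * w.
  rewrite Hqs hw /sigma_s /sigma.
  rewrite (eq_bigr (fun s => c0 * xs s)); last by move=> s sU; rewrite hc.
  by rewrite -mulr_sumr hm; ring.
have mn : (m < n)%N.
  by move: qsn; rewrite qsm ltr_pM2r // ltr_nat.
have gA0 : (1 - 0) * E <= gtan n w qs.
  have := @gtan_ge R n w qs (Ordinal (ltnW mn : (m < n.+1)%N)); rewrite /= -qsm subrr mulr0 addr0.
  by rewrite subr0 mul1r.
have := @final R kappa T B K (gtan n w qs) E Q qs qall _ sigma_s sigma_all Hkappa T0 B0 BK HKQ erefl erefl Hqs erefl qs0 g1 gE gA0 (lexx 0) ltr01.
by rewrite subr0 ln1 mulr0 addr0.
Qed.
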